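(* Let $A$ and $B$ be automata with $A\le_{*T}B$. Then (1) there exist automata $C,D$ with $A\le_H C$, $C\le_P D$ and $D\le_R B$; (2) if moreover $B$ has finite invisible nondeterminism, then there exist automata $C,D$ with $A\le_H C$, $C\le_{iP} D$ and $D\le_R B$.
   Context: An automaton $A$ consists of a set $\mathrm{states}(A)$ of states, a nonempty set $\mathrm{start}(A)\subseteq\mathrm{states}(A)$ of start states, a set $\mathrm{acts}(A)$ of actions containing a distinguished internal action $\tau$, and a set $\mathrm{steps}(A)\subseteq\mathrm{states}(A)\times\mathrm{acts}(A)\times\mathrm{states}(A)$ of steps; write $s\xrightarrow{a}_A t$ for $(s,a,t)\in\mathrm{steps}(A)$. An execution fragment of $A$ is a finite or infinite alternating sequence $s_0a_1s_1a_2s_2\cdots$ of states and actions, beginning with a state and, if finite, ending with a state, such that $s_{i-1}\xrightarrow{a_i}_A s_i$ for all $i>0$. An execution is an execution fragment whose first state is a start state. The trace of an execution fragment is the subsequence of its non-$\tau$ actions; a trace of $A$ is the trace of some execution of $A$, and $\mathrm{traces}^*(A)$ is the set of finite traces of $A$. $A\le_{*T}B$ means $\mathrm{traces}^*(A)\subseteq\mathrm{traces}^*(B)$. For states $s,t$ and a finite sequence $\beta$ of non-$\tau$ actions, write $s\stackrel{\beta}{\Rightarrow}_A t$ if $A$ has a finite execution fragment starting in $s$, with trace $\beta$, ending in $t$. $A$ has finite invisible nondeterminism if $\mathrm{start}(A)$ is finite and for every state $s$ and finite sequence $\beta$ of non-$\tau$ actions there are only finitely many $t$ with $s\stackrel{\beta}{\Rightarrow}_A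 t$. For a relation $R$ write $R[s]=\{u\mid (s,u)\in R\}$; $R$ is image-finite if every $R[s]$ is finite. A step refinement from $A$ to $B$ is a partial function $r:\mathrm{states}(A)\rightharpoonup\mathrm{states}(B)$ such that (1) if $s\in\mathrm{start}(A)$ then $s\in\mathrm{dom}(r)$ and $r(s)\in\mathrm{start}(B)$; (2) if $s\xrightarrow{a}_A t$ and $s\in\mathrm{dom}(r)$ then $t\in\mathrm{dom}(r)$ and either $r(s)=r(t)$ and $a=\tau$, or $r(s)\xrightarrow{a}_B r(t)$. Write $A\le_R B$ if one exists. A normed forward simulation from $A$ to $B$ is a pair $(f,n)$ where $f\subseteq\mathrm{states}(A)\times\mathrm{states}(B)$ and $n:\mathrm{steps}(A)\times\mathrm{states}(B)\to S$ for some set $S$ with a well-founded strict order $<$, such that: (1) if $s\in\mathrm{start}(A)$ then $f[s]\cap\mathrm{start}(B)\neq\emptyset$; (2) if $s\xrightarrow{a}_A t$ and $u\in f[s]$ then (a) $u\in f[t]$ and $a=\tau$, or (b) there is $v\in f[t]$ with $u\xrightarrow{a}_B v$, or (c) there is $v\in f[s]$ with $u\xrightarrow{\tau}_B v$ and $n(s\xrightarrow{a}t,v)<n(s\xrightarrow{a}t,u)$. A normed backward simulation from $A$ to $B$ is a pair $(b,n)$ where $b\subseteq\mathrm{states}(A)\times\mathrm{states}(B)$ is total (every $s\in\mathrm{states}(A)$ has $b[s]\neq\emptyset$) and $n:(\mathrm{steps}(A)\cup\mathrm{start}(A))\times\mathrm{states}(B)\to S$ for some set $S$ with a well-founded strict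 order $<$, such that: (1) if $s\in\mathrm{start}(A)$ and $u\in b[s]$ then (a) $u\in\mathrm{start}(B)$, or (b) there is $v\in b[s]$ with $v\xrightarrow{\tau}_B u$ and $n(s,v)<n(s,u)$; (2) if $t\xrightarrow{a}_A s$ and $u\in b[s]$ then (a) $u\in b[t]$ and $a=\tau$, or (b) there is $v\in b[t]$ with $v\xrightarrow{a}_B u$, or (c) there is $v\in b[s]$ with $v\xrightarrow{\tau}_B u$ and $n(t\xrightarrow{a}s,v)<n(t\xrightarrow{a}s,u)$. A normed history relation from $A$ to $B$ is a pair $(r,n)$ such that $r$ is a step refinement from $B$ to $A$ and $(r^{-1},n)$ is a normed forward simulation from $A$ to $B$; write $A\le_H B$ if one exists. A normed prophecy relation from $A$ to $B$ is a pair $(r,n)$ such that $r$ is a step refinement from $B$ to $A$ and $(r^{-1},n)$ is a normed backward simulation from $A$ to $B$; write $A\le_P B$ if one exists, and $A\le_{iP}B$ if one exists with $r^{-1}$ image-finite. *)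

(* Defs.v *)
From mathcomp Require Import all_boot.
From Stdlib Require List.

Set Implicit Arguments.
Unset Strict Implicit.
Unset Printing Implicit Defensive.

Record automaton (Act : eqType) (tau : Act) : Type := Automaton {
  states : Type;
  start : states -> Prop;
  start_nonempty : exists s, start s;
  acts : Act -> Prop;
  acts_tau : acts tau;
  steps : states -> Act -> states -> Prop;
  steps_acts : forall s a t, steps s a t -> acts a
}.

Arguments automaton : clear implicits.
Arguments states {Act tau}.
Arguments start {Act tau}.
Arguments acts {Act tau}.
Arguments steps {Act tau}.

Section Defs.
Variables (Act : eqType) (tau : Act).
Notation aut := (automaton Act tau).

(* A finite execution fragment starting in [s] is given by [s] and the list
   [(a1,s1); (a2,s2); ...] with s_{i-1} -a_i-> s_i. *)
Fixpoint frag_ok (A : aut) (s : states A) (l : seq (Act * states A)%type) : Prop :=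
  match l with
  | [::] => True
  | (a, t) :: l' => steps A s a t /\ frag_ok t l'
  end.

Definition frag_last (A : aut) (s : states A) (l : seq (Act * states A)%type) : states A :=
  last s [seq p.2 | p <- l].

Definition frag_trace (A : aut) (l : seq (Act * states A)%type) : seq Act :=
  [seq p.1 | p <- l & p.1 != tau].

Definition weak_step (A : aut) (s : states A) (beta : seq Act) (t : states A) : Prop :=
  exists l, frag_ok s l /\ frag_trace l = beta /\ frag_last s l = t.

Definition ftraces (A : aut) (beta : seq Act) : Prop :=
  exists s0 t, start A s0 /\ weak_step s0 beta t.

Definition le_T (A B : aut) : Prop := forall beta, ftraces A beta -> ftraces B beta.

Definition finiteP (T : Type) (P : T -> Prop) : Prop :=
  exists l : list T, forall x, P x -> List.In x l.

Definition fin_invis_nondet (A : aut) : Prop :=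
  finiteP (start A) /\
  forall (s : states A) (beta : seq Act),
    (forall a, a \in beta -> a != tau) -> finiteP (fun t => weak_step s beta t).

Definition image_finite (T U : Type) (R : T -> U -> Prop) : Prop :=
  forall s, finiteP (R s).

(* step refinement: partial function represented as an option-valued function *)
Definition step_refinement (A B : aut) (r : states A -> option (states B)) : Prop :=
  (forall s, start A s -> exists u, r s = Some u /\ start B u) /\
  (forall s a t, steps A s a t -> forall u, r s = Some u ->
     exists v, r t = Some v /\ ((u = v /\ a = tau) \/ steps B u a v)).

Definition le_R (A B : aut) : Prop := exists r, @step_refinement A B r.

Definition forward_sim_cond (A B : aut) (f : states A -> states B -> Prop)
  (S : Type) (lt : S -> S -> Prop)
  (n : forall s a t, steps A s a t -> states B -> S) : Prop :=
  (forall s, start A s -> exists u, f s u /\ start B u) /\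
  (forall s a t (h : steps A s a t) u, f s u ->
     (f t u /\ a = tau) \/
     (exists v, f t v /\ steps B u a v) \/
     (exists v, f s v /\ steps B u tau v /\ lt (n s a t h v) (n s a t h u))).

Definition normed_forward_sim (A B : aut) (f : states A -> states B -> Prop) : Prop :=
  exists (S : Type) (lt : S -> S -> Prop) n, well_founded lt /\ forward_sim_cond f lt n.

Definition backward_sim_cond (A B : aut) (b : states A -> states B -> Prop)
  (S : Type) (lt : S -> S -> Prop)
  (n0 : forall s, start A s -> states B -> S)
  (n : forall t a s, steps A t a s -> states B -> S) : Prop :=
  (forall s, exists u, b s u) /\
  (forall s (h : start A s) u, b s u ->
     start B u \/
     (exists v, b s v /\ steps B v tau u /\ lt (n0 s h v) (n0 s h u))) /\
  (forall t a s (h : steps A t a s) u, b s u ->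
     (b t u /\ a = tau) \/
     (exists v, b t v /\ steps B v a u) \/
     (exists v, b s v /\ steps B v tau u /\ lt (n t a s h v) (n t a s h u))).

Definition normed_backward_sim (A B : aut) (b : states A -> states B -> Prop) : Prop :=
  exists (S : Type) (lt : S -> S -> Prop) n0 n,
    well_founded lt /\ backward_sim_cond b lt n0 n.

Definition inv_rel (A B : aut) (r : states B -> option (states A)) :
  states A -> states B -> Prop := fun s u => r u = Some s.

Definition le_H (A B : aut) : Prop :=
  exists r : states B -> option (states A),
    @step_refinement B A r /\ normed_forward_sim (inv_rel r).

Definition le_P (A B : aut) : Prop :=
  exists r : states B -> option (states A),
    @step_refinement B A r /\ normed_backward_sim (inv_rel r).

Definition le_iP (A B : aut) : Prop :=
  exists r : states B -> option (states A),
    @step_refinement B A r /\ image_finite (inv_rel r) /\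
    normed_backward_sim (inv_rel r).

End Defs.

(* Main.v *)
Require Import Defs.
From mathcomp Require Import all_boot.
From Stdlib Require Import Classical ClassicalEpsilon ProofIrrelevance.
From Stdlib Require List.

Set Implicit Arguments.
Unset Strict Implicit.

Section S.
Variables (Act : eqType) (tau : Act).
Notation aut := (automaton Act tau).

Definition extb (b : seq Act) (a : Act) := if a != tau then rcons b a else b.

Lemma frag_last_cons (A : aut) (s : states A) p l : frag_last s (p :: l) = frag_last p.2 l.
Proof. by []. Qed.

Lemma frag_last_rcons (A : aut) (s : states A) l a t : frag_last s (rcons l (a,t)) = t.
Proof. by rewrite /frag_last map_rcons last_rcons. Qed.

Lemma frag_ok_rcons (A : aut) (s : states A) l a t :
  frag_ok s (rcons l (a,t)) <-> frag_ok s l /\ steps A (frag_last s l) a t.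
Proof.
elim: l s => [|[b u] l IH] s /=.
- by split; [case|case].
- rewrite IH frag_last_cons /=; tauto.
Qed.

Lemma frag_trace_rcons (A : aut) (l : seq (Act * states A)) a t :
  frag_trace (rcons l (a,t)) = extb (frag_trace l) a.
Proof. by rewrite /frag_trace /extb filter_rcons /=; case: ifP => _; rewrite ?map_rcons. Qed.

Lemma frag_trace_nontau (A : aut) (l : seq (Act * states A)) a :
  a \in frag_trace l -> a != tau.
Proof.
rewrite /frag_trace; elim: l => [|[b u] l IH] //=.
case: ifP => Hb //=; rewrite inE => /orP [/eqP ->|] //; exact: IH.
Qed.

Lemma minP (P : nat -> Prop) n : P n -> exists k, P k /\ forall j, P j -> k <= j.
Proof.
elim: n {-2}n (leqnn n) => [|n IH] m Hm Pm.
- by exists m; split => // j _; move: Hm; rewrite leqn0 => /eqP ->.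
- case: (classic (exists j, j < m /\ P j)) => [[j [Hj Pj]]|N].
  + apply: (IH j) => //; rewrite -ltnS; exact: leq_trans Hj Hm.
  + exists m; split => // j Pj; case: (leqP m j) => // Hj.
    by exfalso; apply: N; exists j.
Qed.

Lemma weak_ext (A : aut) (s0 : states A) beta s a t :
  weak_step s0 beta s -> steps A s a t -> weak_step s0 (extb beta a) t.
Proof.
case=> l [Hok [Htr Hl]] Hst; exists (rcons l (a,t)).
rewrite frag_ok_rcons frag_trace_rcons frag_last_rcons Htr Hl; by repeat split.
Qed.

Variables A B : aut.

Definition Cval (p : states A * seq Act) := exists s0, start A s0 /\ weak_step s0 p.2 p.1.
Definition Cst := {p | Cval p}.
Definition Cstart (c : Cst) := start A (sval c).1 /\ (sval c).2 = [::].
Definition Csteps (c : Cst) a (c' : Cst) :=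
  steps A (sval c).1 a (sval c').1 /\ (sval c').2 = extb (sval c).2 a.

Lemma Cstart_ne : exists c, Cstart c.
Proof.
have [s0 Hs0] := start_nonempty A.
have H : Cval (s0, [::]) by exists s0; split => //; exists [::]; repeat split.
by exists (exist _ _ H); split.
Qed.

Definition Caut : aut :=
  @Automaton Act tau Cst Cstart Cstart_ne (acts A) (acts_tau A) Csteps
    (fun s a t h => steps_acts h.1).

Lemma leHC : le_H A Caut.
Proof.
exists (fun c : Cst => Some (sval c).1); split.
- split.
  + by move=> s [H _]; exists (sval s).1.
  + move=> s a t [H _] u [<-]; exists (sval t).1; split => //; by right.
- exists unit, (fun _ _ => False), (fun _ _ _ _ _ => tt); split.
  + by move=> x; constructor => y [].
  split.
  + move=> s Hs.
    have H : Cval (s, [::]) by exists s; split => //; exists [::]; repeat split.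
    by exists (exist _ _ H); split => //; split.
  + move=> s a t h [[s' beta] [s0 [Hs0 Hw]]] /= [Es]; subst s'.
    right; left.
    have H : Cval (t, extb beta a) by exists s0; split => //; exact: weak_ext Hw h.
    by exists (exist _ _ H); split => //; split.
Qed.

Definition reachk (beta : seq Act) (w : states B) k :=
  exists u0 m, start B u0 /\ frag_ok u0 m /\ frag_trace m = beta /\
               frag_last u0 m = w /\ size m = k.
Definition Dval (d : Cst * states B) := exists k, reachk (sval d.1).2 d.2 k.
Definition Dst := {d | Dval d}.
Definition Dstart (d : Dst) := Cstart (sval d).1 /\ start B (sval d).2.
Definition Dsteps (d : Dst) a (d' : Dst) :=
  (((sval d').1 = (sval d).1 /\ a = tau) \/ Csteps (sval d).1 a (sval d').1) /\
  (((sval d').2 = (sval d).2 /\ a = tau) \/ steps B (sval d).2 a (sval d').2).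

Lemma Dstart_ne : exists d, Dstart d.
Proof.
have [c Hc] := Cstart_ne; have [u0 Hu0] := start_nonempty B.
have H : Dval (c, u0).
  exists 0, u0, [::]; case: Hc => _ /= ->; by repeat split.
by exists (exist _ _ H).
Qed.

Lemma Dsteps_acts d a d' : Dsteps d a d' -> acts B a.
Proof. case => _ [[_ ->]|H]; [exact: acts_tau | exact: steps_acts H]. Qed.

Definition Daut : aut :=
  @Automaton Act tau Dst Dstart Dstart_ne (acts B) (acts_tau B) Dsteps Dsteps_acts.

Definition rD (d : Dst) : option Cst := Some (sval d).1.

Lemma leRD : le_R Daut B.
Proof.
exists (fun d : Dst => Some (sval d).2); split.
- by move=> s [_ H]; exists (sval s).2.
- move=> s a t [_ H] u [<-]; exists (sval t).2; split => //.
  by case: H => [[-> ->]|H]; [left|right].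
Qed.

Definition ltD (d1 d2 : Dst) :=
  exists k, reachk (sval (sval d1).1).2 (sval d1).2 k /\
    forall j, reachk (sval (sval d2).1).2 (sval d2).2 j -> k < j.

Lemma wf_ltD : well_founded ltD.
Proof.
have Q : forall n k d, k <= n -> reachk (sval (sval d).1).2 (sval d).2 k -> Acc ltD d.
  elim => [|n IH] k d Hk Rk; constructor => d2 [k2 [R2 Hlt]].
  - by have := Hlt _ Rk; move: Hk; rewrite leqn0 => /eqP ->.
  - apply: (IH k2) => //; have := Hlt _ Rk => H; rewrite -ltnS; exact: leq_trans H Hk.
move=> d; constructor => d1 [k [Rk _]]; exact: (Q k k).
Qed.

Lemma min_exec (d : Dst) : exists u0 m, start B u0 /\ frag_ok u0 m /\
   frag_trace m = (sval (sval d).1).2 /\ frag_last u0 m = (sval d).2 /\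
   forall j, reachk (sval (sval d).1).2 (sval d).2 j -> size m <= j.
Proof.
case: d => [[c w] [k Hk]] /=.
have [k' [[u0 [m [H1 [H2 [H3 [H4 H5]]]]]] Hmin]] := minP Hk.
by exists u0, m; rewrite H5.
Qed.

Lemma pred_state (d : Dst) (c' : Cst) u0 m' x y :
  start B u0 -> frag_ok u0 (rcons m' (x,y)) ->
  frag_trace m' = (sval c').2 -> frag_last u0 (rcons m' (x,y)) = (sval d).2 ->
  (forall j, reachk (sval (sval d).1).2 (sval d).2 j -> size (rcons m' (x,y)) <= j) ->
  exists v : Dst, sval v = (c', frag_last u0 m') /\ steps B (frag_last u0 m') x (sval d).2 /\
    ltD v d.
Proof.
move=> Hu0 Hok Htr Hl Hmin.
move/frag_ok_rcons: Hok => [Hok Hst]; rewrite frag_last_rcons in Hl; subst y.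
have H : Dval (c', frag_last u0 m') by exists (size m'), u0, m'.
exists (exist _ _ H); split => //; split => //.
exists (size m'); split; first by exists u0, m'.
by move=> j /Hmin; rewrite size_rcons.
Qed.

Hypothesis HT : le_T A B.

Lemma lePD : @step_refinement Act tau Daut Caut rD /\ normed_backward_sim (@inv_rel Act tau Caut Daut rD).
Proof.
split.
- split.
  + by move=> s [H _]; exists (sval s).1.
  + move=> s a t [H _] u [<-]; exists (sval t).1; split => //.
    by case: H => [[-> ->]|H]; [left|right].
exists Dst, ltD, (fun _ _ d => d), (fun _ _ _ _ d => d); split; first exact: wf_ltD.
split; [|split].
- move=> [[s beta] [s0 [Hs0 [l [Hok [Htr Hl]]]]]].
  have [u0 [t [Hu0 [m [Hm [Htm Hlm]]]]]] : ftraces B beta.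
    by apply: HT; exists s0, s; split => //; exists l.
  have H : Dval (exist _ (s, beta) (ex_intro _ s0 (conj Hs0 (ex_intro _ l (conj Hok (conj Htr Hl))))), t).
    by exists (size m), u0, m.
  by exists (exist _ _ H).
- move=> s Hs [[c w] Hcw] /= [Ec]; subst c.
  have [u0 [m [Hu0 [Hok [Htr [Hl Hmin]]]]]] := min_exec (exist _ _ Hcw).
  rewrite /= in Htr Hl Hmin.
  case/lastP: m Hok Htr Hl Hmin => [|m' [x y]] Hok Htr Hl Hmin.
  + by left; split => //=; rewrite -Hl.
  + right.
    case: Hs => _ Hb; rewrite Hb frag_trace_rcons /extb in Htr.
    case: ifP Htr => Hx Htr; first by have := congr1 size Htr; rewrite size_rcons.
    have [v [Ev [Hst Hlt]]] := pred_state (d := exist _ _ Hcw) (c' := s) Hu0 Hok (etrans Htr (esym Hb)) Hl Hmin.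
    exists v; rewrite /inv_rel /rD Ev; split => //; split => //.
    rewrite /Dsteps Ev /=; move/negbFE/eqP: Hx => Hx; subst x; split; by [left|right].
- move=> t a s [hA hT] [[c w] Hcw] /= [Ec]; subst c.
  right.
  case: (eqVneq a tau) => Ha.
  + subst a; rewrite /extb eqxx /= in hT.
    have H : Dval (t, w) by case: Hcw => k Hk; exists k; rewrite -hT.
    left; exists (exist _ _ H); split => //; split.
  * by right; split => //=; rewrite hT /extb eqxx.
  * by left.
  + rewrite /extb Ha in hT.
    have [u0 [m [Hu0 [Hok [Htr [Hl Hmin]]]]]] := min_exec (exist _ _ Hcw).
    rewrite /= hT in Htr Hl.
    case/lastP: m Hok Htr Hl Hmin => [|m' [x y]] Hok Htr Hl Hmin.
    * by exfalso; case: (sval t).2 Htr.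
    * rewrite frag_trace_rcons /extb in Htr.
      case: ifP Htr => Hx Htr.
      - have [Em Ex] : frag_trace m' = (sval t).2 /\ x = a.
          by move/eqP: Htr; rewrite eqseq_rcons => /andP [/eqP -> /eqP ->].
        subst x.
        have [v [Ev [Hst Hlt]]] := pred_state (d := exist _ _ Hcw) (c' := t) Hu0 Hok Em Hl (fun j => Hmin j).
        left; exists v; rewrite /inv_rel /rD Ev; split => //.
        rewrite /Dsteps Ev /=; split; right => //; by split => //; rewrite /extb Ha.
      - have [v [Ev [Hst Hlt]]] := pred_state (d := exist _ _ Hcw) (c' := s) Hu0 Hok (etrans Htr (esym hT)) Hl (fun j => Hmin j).
        right; exists v; rewrite /inv_rel /rD Ev; split => //; split => //.
        rewrite /Dsteps Ev /=; move/negbFE/eqP: Hx => Hx; subst x; split; by [left|right].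
Qed.

Lemma Dfin : fin_invis_nondet B -> image_finite (@inv_rel Act tau Caut Daut rD).
Proof.
case=> [[LS HLS] Hw] c.
have Hnt : forall a, a \in (sval c).2 -> a != tau.
  case: c => [[s beta] [s0 [_ [l [_ [Htr _]]]]]] /= a; rewrite /= in Htr; rewrite -Htr; exact: frag_trace_nontau.
have Hu : forall L : list (states B), exists W : list (states B), forall u0 w,
    List.In u0 L -> weak_step u0 (sval c).2 w -> List.In w W.
  elim => [|u L [W HW]]; first by exists nil.
  have [W1 HW1] := Hw u _ Hnt.
  exists (W1 ++ W)%list => u0 w [<-|Hin] Hws; apply List.in_or_app;
    [left; exact: HW1 | right; exact: HW u0 w Hin Hws].
have [W HW] := Hu LS.
pose f (w : states B) : list Dst :=
  match excluded_middle_informative (Dval (c,w)) with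
  | left p => (exist _ (c,w) p :: nil)%list | right _ => nil end.
exists (List.flat_map f W) => [[[c' w] p]] Ec.
case: Ec => Ec; subst c'.
apply List.in_flat_map; exists w; split.
- case: (p) => k [u0 [m [Hu0 [Hok [Htr [Hl _]]]]]]; apply: (HW u0); [exact: HLS | by exists m].
- rewrite /f; case: excluded_middle_informative => [p'|np]; last by [].
  left; congr exist; exact: proof_irrelevance.
Qed.
End S.

Theorem mainTheorem4 (Act : eqType) (tau : Act) (A B : automaton Act tau) :
  le_T A B ->
  (exists C D : automaton Act tau, le_H A C /\ le_P C D /\ le_R D B) /\
  (fin_invis_nondet B ->
   exists C D : automaton Act tau, le_H A C /\ le_iP C D /\ le_R D B).
Proof.
move=> HT; have [H1 H2] := lePD HT; split; [|move=> Hf];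
  exists (Caut A), (Daut A B); split; try exact: leHC; split; try exact: leRD.
- by exists (rD (A:=A) (B:=B)).
- exists (rD (A:=A) (B:=B)); split => //; split => //; exact: Dfin.
Qed.
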